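(* For all integers $n\ge2$, $$\mathcal A_{2n-3}\cap\gamma_{n+1}(\mathcal R)=\mathcal A_{2n-1}.$$
   Context: $\mathcal R=\mathcal R(\mathbb F_2)$ is the Riordan group of pairs $(g,f)$ of formal power series over $\mathbb F_2$ with $g=1+\cdots$, $f=t+\cdots$, product $(g_1,f_1)(g_2,f_2)=(g_1\cdot(g_2\circ f_1),\,f_2\circ f_1)$; it is a pro-2 group with the $t$-adic topology. $\mathcal A=\{(g,t)\}$ is the Appell subgroup and $\mathcal A_m=\{(g,t):g\equiv1\pmod{t^{m+1}}\}$. The lower central series is $\gamma_1(\mathcal R)=\mathcal R$, $\gamma_i(\mathcal R)=[\gamma_{i-1}(\mathcal R),\mathcal R]$, where $[X,Y]$ is the smallest closed subgroup containing all commutators $x^{-1}y^{-1}xy$, $x\in X$, $y\in Y$. *)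

(* Defs.v *)
From mathcomp Require Import all_boot all_algebra.
Set Implicit Arguments. Unset Strict Implicit. Unset Printing Implicit Defensive.
Import GRing.Theory.
Local Open Scope ring_scope.

Definition series := nat -> 'F_2.

Definition sone : series := fun n => (n == 0%N)%:R.
Definition sX : series := fun n => (n == 1%N)%:R.

Definition smul (a b : series) : series :=
  fun n => \sum_(i < n.+1) a i * b (n - i)%N.

Definition spow (f : series) (k : nat) : series := iter k (smul f) sone.

(* Composition h o f, meaningful when f 0 = 0 (then each coefficient is a finite sum). *)
Definition scomp (h f : series) : series :=
  fun n => \sum_(k < n.+1) h k * spow f k n.

Definition rpair := (series * series)%type.

Definition inR (x : rpair) : Prop :=
  x.1 0%N = 1 /\ x.2 0%N = 0 /\ x.2 1%N = 1.

Definition rmul (x y : rpair) : rpair :=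
  (smul x.1 (scomp y.1 x.2), scomp y.2 x.2).

Definition rid : rpair := (sone, sX).

Definition rinv (x y : rpair) : Prop :=
  inR y /\ rmul x y = rid /\ rmul y x = rid.

Definition rset := rpair -> Prop.

Definition Appell (m : nat) : rset := fun x =>
  inR x /\ x.2 = sX /\ forall i, (1 <= i <= m)%N -> x.1 i = 0.

Definition subgroupR (H : rset) : Prop :=
  (forall x, H x -> inR x) /\ H rid /\
  (forall x y, H x -> H y -> H (rmul x y)) /\
  (forall x, H x -> exists y, H y /\ rinv x y).

(* closed subsets of R in the t-adic topology *)
Definition closedR (S : rset) : Prop :=
  forall x, inR x ->
    (forall N, exists s, S s /\ forall i, (i <= N)%N -> s.1 i = x.1 i /\ s.2 i = x.2 i) ->
    S x.

Definition is_comm (H K : rset) (c : rpair) : Prop :=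
  exists x y xi yi, H x /\ K y /\ inR x /\ inR y /\ rinv x xi /\ rinv y yi /\
    c = rmul (rmul (rmul xi yi) x) y.

Definition commR (H K : rset) : rset := fun z =>
  forall S, subgroupR S -> closedR S -> (forall c, is_comm H K c -> S c) -> S z.

(* gamma i = gamma_{i+1}(R) *)
Fixpoint gammaR (i : nat) : rset :=
  match i with
  | 0 => inR
  | i'.+1 => commR (gammaR i') inR
  end.

(* Main.v *)
Require Import Defs.
From mathcomp Require Import all_boot all_algebra.
From mathcomp Require Import ring zify.
From Stdlib Require Import Lia.
From Stdlib Require Import FunctionalExtensionality.
Set Implicit Arguments. Unset Strict Implicit. Unset Printing Implicit Defensive.
Import GRing.Theory.
Local Open Scope ring_scope.

Notation F := 'F_2.
Notation P := {poly 'F_2}.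

Lemma F2_2 : (2%:R : F) = 0. Proof. by apply/eqP. Qed.
Lemma F2_add (a : F) : a + a = 0.
Proof. by rewrite -mulr2n -mulr_natr F2_2 mulr0. Qed.
Lemma P2_add (p : P) : p + p = 0.
Proof. by rewrite -mulr2n -mulr_natr -polyC_natr F2_2 mulr0. Qed.

Implicit Types p q r s : P.
Definition pdv (m : nat) (p : P) := exists r, p = 'X^m * r.
Definition pc m (p q : P) := pdv m (p - q).

Lemma pdv0 m : pdv m 0. Proof. by exists 0; rewrite mulr0. Qed.
Lemma pdvD m p q : pdv m p -> pdv m q -> pdv m (p + q).
Proof. by move=> [r ->] [s ->]; exists (r + s); rewrite mulrDr. Qed.
Lemma pdvN m p : pdv m p -> pdv m (- p).
Proof. by move=> [r ->]; exists (- r); rewrite mulrN. Qed.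
Lemma pdvB m p q : pdv m p -> pdv m q -> pdv m (p - q).
Proof. by move=> ? ?; apply: pdvD => //; apply: pdvN. Qed.
Lemma pdvMl m p q : pdv m p -> pdv m (q * p).
Proof. by move=> [r ->]; exists (q * r); rewrite mulrCA. Qed.
Lemma pdvMr m p q : pdv m p -> pdv m (p * q).
Proof. by move=> ?; rewrite mulrC; apply: pdvMl. Qed.
Lemma pdvM a b p q : pdv a p -> pdv b q -> pdv (a + b) (p * q).
Proof. by move=> [r ->] [s ->]; exists (r * s); rewrite exprD; ring. Qed.
Lemma pdvW a b p : (a <= b)%N -> pdv b p -> pdv a p.
Proof.
move=> ab [r ->]; exists ('X^(b - a) * r).
by rewrite mulrA -exprD subnKC.
Qed.
Lemma pdvXn a b : (a <= b)%N -> pdv a 'X^b.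
Proof. by move=> ab; apply: (pdvW ab); exists 1; rewrite mulr1. Qed.
Lemma pdvXM m r : pdv m ('X^m * r). Proof. by exists r. Qed.
Lemma pdvexp a k p : pdv a p -> pdv (a * k) (p ^+ k).
Proof.
move=> [r ->]; exists (r ^+ k); by rewrite exprMn exprM.
Qed.
Lemma pdv_coef m p i : pdv m p -> (i < m)%N -> p`_i = 0.
Proof. by move=> [r ->] im; rewrite coefXnM im. Qed.
Lemma coef_pdv m p : (forall i, (i < m)%N -> p`_i = 0) -> pdv m p.
Proof.
move=> H; exists (drop_poly m p).
rewrite -{1}(poly_take_drop m p) mulrC.
suff -> : take_poly m p = 0 by rewrite add0r.
by apply/polyP => i; rewrite coef_take_poly coef0; case: ifP => // /H.
Qed.

Lemma pc_refl m p : pc m p p. Proof. by rewrite /pc subrr; apply: pdv0. Qed.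
Lemma pc_sym m p q : pc m p q -> pc m q p.
Proof. by rewrite /pc => /pdvN; rewrite opprB. Qed.
Lemma pc_trans m p q r : pc m p q -> pc m q r -> pc m p r.
Proof. by rewrite /pc => h1 h2; have := pdvD h1 h2; rewrite addrA subrK. Qed.
Lemma pcD m (p p' q q' : P) : pc m p p' -> pc m q q' -> pc m (p + q) (p' + q').
Proof.
rewrite /pc => h1 h2; have := pdvD h1 h2.
by rewrite (_ : p - p' + (q - q') = p + q - (p' + q')) //; ring.
Qed.
Lemma pcN m (p p' : P) : pc m p p' -> pc m (- p) (- p').
Proof. by rewrite /pc => /pdvN; rewrite opprB opprK addrC. Qed.
Lemma pcB m (p p' q q' : P) : pc m p p' -> pc m q q' -> pc m (p - q) (p' - q').
Proof. by move=> ? ?; apply: pcD => //; apply: pcN. Qed.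
Lemma pcM m (p p' q q' : P) : pc m p p' -> pc m q q' -> pc m (p * q) (p' * q').
Proof.
rewrite /pc => h1 h2; have := pdvD (pdvMr q h1) (pdvMl p' h2).
by rewrite (_ : (p - p') * q + p' * (q - q') = p * q - p' * q') //; ring.
Qed.
Lemma pcX m (p p' : P) k : pc m p p' -> pc m (p ^+ k) (p' ^+ k).
Proof.
move=> h; elim: k => [|k IH]; first by rewrite !expr0; apply: pc_refl.
by rewrite !exprS; apply: pcM.
Qed.
Lemma pcW a b p q : (a <= b)%N -> pc b p q -> pc a p q.
Proof. by move=> ab; apply: pdvW. Qed.
Lemma pc_pdv m p q : pc m p q -> pdv m q -> pdv m p.
Proof. by move=> h1 h2; have := pdvD h1 h2; rewrite subrK. Qed.
Lemma pc_coef m p q i : pc m p q -> (i < m)%N -> p`_i = q`_i.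
Proof. by move=> h im; apply/eqP; rewrite -subr_eq0 -coefB (pdv_coef h im). Qed.
Lemma coef_pc m p q : (forall i, (i < m)%N -> p`_i = q`_i) -> pc m p q.
Proof. by move=> H; apply: coef_pdv => i im; rewrite coefB H // subrr. Qed.

Lemma pc_comp_r m (p q q' : P) : pc m q q' -> pc m (p \Po q) (p \Po q').
Proof.
move=> h; elim/poly_ind: p => [|p c IH]; first by rewrite !comp_poly0; apply: pc_refl.
rewrite !comp_poly_MXaddC; apply: pcD; last by apply: pc_refl.
by apply: pcM.
Qed.

Lemma compXn (m : nat) (q : P) : 'X^m \Po q = q ^+ m.
Proof. by rewrite rmorphXn /= comp_polyX. Qed.

Lemma pdv_comp m p q : pdv m p -> pdv 1 q -> pdv m (p \Po q).
Proof.
move=> [r ->] hq; rewrite comp_polyM compXn; apply: pdvMr.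
by have := pdvexp m hq; rewrite mul1n.
Qed.
Lemma pc_comp_l m (p p' q : P) : pc m p p' -> pdv 1 q -> pc m (p \Po q) (p' \Po q).
Proof. by rewrite /pc -comp_polyB; apply: pdv_comp. Qed.
Lemma pc_comp m (p p' q q' : P) : pc m p p' -> pc m q q' -> pdv 1 q -> pc m (p \Po q) (p' \Po q').
Proof. by move=> h1 h2 h3; apply: pc_trans (pc_comp_l h1 h3) (pc_comp_r _ h2). Qed.

Definition sc m (a : series) (p : P) := forall i, (i < m)%N -> a i = p`_i.
Definition tr m (a : series) : P := \poly_(i < m) a i.

Lemma sc_tr m a : sc m a (tr m a).
Proof. by move=> i im; rewrite coef_poly im. Qed.
Lemma sc_pc m a p q : sc m a p -> pc m p q -> sc m a q.
Proof. by move=> h1 h2 i im; rewrite h1 // (pc_coef h2 im). Qed.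
Lemma sc_pc' m a p q : sc m a p -> sc m a q -> pc m p q.
Proof. by move=> h1 h2; apply: coef_pc => i im; rewrite -h1 // -h2. Qed.
Lemma sc_W n m a p : (n <= m)%N -> sc m a p -> sc n a p.
Proof. by move=> nm h i im; apply: h; apply: leq_trans nm. Qed.
Lemma sc_ext (a b : series) : (forall m, exists p, sc m a p /\ sc m b p) -> a = b.
Proof.
move=> H; apply: FunctionalExtensionality.functional_extensionality => i.
by have [p [h1 h2]] := H i.+1; rewrite h1 // h2.
Qed.
Lemma sc_sone m : sc m sone 1.
Proof. by move=> i _; rewrite coefC /sone; case: (i == 0%N). Qed.
Lemma sc_sX m : sc m sX 'X.
Proof. by move=> i _; rewrite coefX. Qed.

Lemma sc_smul m a b p q : sc m a p -> sc m b q -> sc m (smul a b) (p * q).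
Proof.
move=> ha hb i im; rewrite /smul coefM; apply: eq_bigr => j _.
have ji : (j <= i)%N by rewrite -ltnS.
rewrite ha ?hb //; first by apply: leq_ltn_trans (leq_subr _ _) im.
by apply: leq_ltn_trans ji im.
Qed.

Lemma sc_spow m f q k : sc m f q -> sc m (spow f k) (q ^+ k).
Proof.
move=> h; elim: k => [|k IH]; first by rewrite expr0; apply: sc_sone.
by rewrite exprS; apply: sc_smul.
Qed.

Lemma spow_low f k i : f 0%N = 0 -> (i < k)%N -> spow f k i = 0.
Proof.
move=> f0 ik.
have h := sc_spow k (@sc_tr i.+1 f).
rewrite (h i (ltnSn i)); apply: (pdv_coef _ ik).
rewrite -[X in pdv X _]mul1n; apply: pdvexp; apply: coef_pdv => j; rewrite ltnS leqn0 => /eqP ->.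
by rewrite coef_poly /= f0.
Qed.

Lemma sum_widen (n N : nat) (G : nat -> F) : (n <= N)%N ->
  (forall k, (n <= k < N)%N -> G k = 0) ->
  \sum_(k < n) G k = \sum_(k < N) G k.
Proof.
move=> nN H; rewrite (big_ord_widen N G nN) big_mkcond; apply: eq_bigr => k _.
case: ifP => // /negbT; rewrite -leqNgt => nk; by rewrite H // nk ltn_ord.
Qed.

Lemma sc_scomp m h f p q : sc m h p -> sc m f q -> f 0%N = 0 ->
  sc m (scomp h f) (p \Po q).
Proof.
move=> hh hf f0 i im.
have q0 : pdv 1 q.
  apply: coef_pdv => j; rewrite ltnS leqn0 => /eqP ->.
  by rewrite -hf ?f0 //; apply: leq_ltn_trans im.
have qk : forall k, (i < k)%N -> (q ^+ k)`_i = 0.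
  move=> k ik; apply: (pdv_coef _ ik).
  by rewrite -[X in pdv X _]mul1n; apply: pdvexp.
rewrite /scomp coef_comp_poly.
set N := maxn (size p) i.+1.
rewrite (@sum_widen i.+1 N (fun k => h k * spow f k i)); last 2 first.
- by rewrite leq_maxr.
- by move=> k /andP [ik _]; rewrite spow_low // mulr0.
rewrite (@sum_widen (size p) N (fun k => p`_k * (q ^+ k)`_i)); last 2 first.
- by rewrite leq_maxl.
- by move=> k /andP [ik _]; rewrite nth_default // mul0r.
apply: eq_bigr => k _.
rewrite (sc_spow k hf im).
case: (leqP k i) => ki.
  by rewrite hh //; apply: leq_ltn_trans ki im.
by rewrite qk // !mulr0.
Qed.

Lemma scomp0 g f : g 0%N = 0 -> scomp g f 0%N = 0.
Proof. by move=> g0; rewrite /scomp big_ord1 g0 mul0r. Qed.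

Lemma smulC a b : smul a b = smul b a.
Proof.
apply: sc_ext => m; exists (tr m a * tr m b); split; first by apply: sc_smul; apply: sc_tr.
by rewrite mulrC; apply: sc_smul; apply: sc_tr.
Qed.
Lemma smulA a b c : smul (smul a b) c = smul a (smul b c).
Proof.
apply: sc_ext => m; exists (tr m a * tr m b * tr m c); split.
  by apply: sc_smul; [apply: sc_smul|]; apply: sc_tr.
by rewrite -mulrA; apply: sc_smul; [|apply: sc_smul]; apply: sc_tr.
Qed.
Lemma smul1 a : smul sone a = a.
Proof.
apply: sc_ext => m; exists (1 * tr m a); split; first by apply: sc_smul; [apply: sc_sone| apply: sc_tr].
by rewrite mul1r; apply: sc_tr.
Qed.
Lemma smulr1 a : smul a sone = a.
Proof. by rewrite smulC smul1. Qed.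
Lemma scompXr h : scomp h sX = h.
Proof.
apply: sc_ext => m; exists (tr m h \Po 'X); split.
  by apply: sc_scomp => //; [apply: sc_tr | apply: sc_sX].
by rewrite comp_polyXr; apply: sc_tr.
Qed.
Lemma scompXl f : f 0%N = 0 -> scomp sX f = f.
Proof.
move=> f0; apply: sc_ext => m; exists ('X \Po tr m f); split.
  by apply: sc_scomp => //; [apply: sc_sX | apply: sc_tr].
by rewrite comp_polyX; apply: sc_tr.
Qed.
Lemma scomp1 f : f 0%N = 0 -> scomp sone f = sone.
Proof.
move=> f0; apply: sc_ext => m; exists (1 \Po tr m f); split.
  by apply: sc_scomp => //; [apply: sc_sone | apply: sc_tr].
by rewrite comp_polyC; apply: sc_sone.
Qed.
Lemma scompM a b f : f 0%N = 0 -> scomp (smul a b) f = smul (scomp a f) (scomp b f).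
Proof.
move=> f0; apply: sc_ext => m; exists ((tr m a * tr m b) \Po tr m f); split.
  by apply: sc_scomp => //; [apply: sc_smul|]; apply: sc_tr.
by rewrite comp_polyM; apply: sc_smul; apply: sc_scomp => //; apply: sc_tr.
Qed.
Lemma scompA h g f : g 0%N = 0 -> f 0%N = 0 ->
  scomp (scomp h g) f = scomp h (scomp g f).
Proof.
move=> g0 f0; apply: sc_ext => m; exists ((tr m h \Po tr m g) \Po tr m f); split.
  by apply: sc_scomp => //; [apply: sc_scomp|]; try apply: sc_tr.
rewrite -comp_polyA; apply: sc_scomp; last by apply: scomp0.
  by apply: sc_tr.
by apply: sc_scomp => //; apply: sc_tr.
Qed.

Lemma inR_sc x : inR x <-> (sc 1 x.1 1 /\ sc 2 x.2 'X).
Proof.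
split.
  move=> [h0 [f0 f1]]; split => i.
    by rewrite ltnS leqn0 => /eqP ->; rewrite coefC.
  case: i => [_|[_|//]]; first by rewrite coefX f0.
  by rewrite coefX f1.
move=> [h1 h2]; split; first by rewrite (h1 0%N) // coefC.
by rewrite (h2 0%N) // (h2 1%N) // !coefX.
Qed.

Lemma rmulA x y z : x.2 0%N = 0 -> y.2 0%N = 0 ->
  rmul (rmul x y) z = rmul x (rmul y z).
Proof.
move=> x0 y0; rewrite /rmul /=.
by rewrite scompM // scompA // smulA scompA.
Qed.
Lemma rmul1 x : rmul rid x = x.
Proof. by case: x => g f; rewrite /rmul /= !scompXr smul1. Qed.
Lemma rmulr1 x : x.2 0%N = 0 -> rmul x rid = x.
Proof. by case: x => g f /= f0; rewrite /rmul /= scomp1 // smulr1 scompXl. Qed.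

Lemma sc_eqp m a p q : sc m a p -> p = q -> sc m a q.
Proof. by move=> h <-. Qed.

Lemma inR_mul x y : inR x -> inR y -> inR (rmul x y).
Proof.
move=> /inR_sc [gx fx] /inR_sc [gy fy]; apply/inR_sc; split => /=.
  apply: (@sc_eqp _ _ (1 * (1%:P \Po 'X))); last by rewrite comp_polyC mul1r.
  apply: sc_smul => //; apply: sc_scomp => //; first by apply: sc_W fx.
  by rewrite (fx 0%N) // coefX.
apply: (@sc_eqp _ _ ('X \Po 'X)); last by rewrite comp_polyX.
apply: sc_scomp => //.
by rewrite (fx 0%N) // coefX.
Qed.

Lemma pdv1_coef0 p : p`_0 = 0 -> pdv 1 p.
Proof. by move=> h; apply: coef_pdv => i; rewrite ltnS leqn0 => /eqP ->. Qed.

Lemma tr_pc m n a : (m <= n)%N -> pc m (tr n a) (tr m a).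
Proof.
move=> mn; apply: coef_pc => i im; rewrite !coef_poly im.
by rewrite (leq_trans im mn).
Qed.

Fixpoint Vn (w : series) (j : nat) : P :=
  match j with
  | 0 => 1
  | j'.+1 => let V := Vn w j' in V - (tr j.+1 w * V - 1)
  end.

Lemma Vn_inv w j : w 0%N = 1 -> pc j.+1 (tr j.+1 w * Vn w j) 1.
Proof.
move=> w0; elim: j => [|j IH].
  apply: coef_pc => i; rewrite ltnS leqn0 => /eqP ->.
  by rewrite /= mulr1 coef_poly /= w0 coefC.
rewrite [Vn w j.+1]/=.
set V := Vn w j; set W := tr j.+2 w; set E := W * V - 1.
have hE : pdv j.+1 E.
  rewrite /E; have h1 : pc j.+1 (W * V) (tr j.+1 w * V).
    by apply: pcM; [apply: tr_pc | apply: pc_refl].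
  exact: (pc_trans h1 IH).
have hW : pdv 1 (1 - W).
  by apply: pdv1_coef0; rewrite coefB coef_poly /= w0 coefC subrr.
have := pdvM hE hW; rewrite addn1 /pc.
by rewrite (_ : E * (1 - W) = W * (V - E) - 1) // /E; ring.
Qed.

Lemma Vn_coh w j : w 0%N = 1 -> pc j.+1 (Vn w j.+1) (Vn w j).
Proof.
move=> w0; rewrite /pc [Vn w j.+1]/= (_ : forall a b : P, a - b - a = - b); last by move=> a b; ring.
apply: pdvN.
have h1 : pc j.+1 (tr j.+2 w * Vn w j) (tr j.+1 w * Vn w j).
  by apply: pcM; [apply: tr_pc | apply: pc_refl].
exact: (pc_trans h1 (Vn_inv j w0)).
Qed.

Lemma chain (U : nat -> P) : (forall j, pc j.+1 (U j.+1) (U j)) ->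
  forall i j, (i <= j)%N -> pc i.+1 (U j) (U i).
Proof.
move=> H i; elim=> [|j IH]; first by rewrite leqn0 => /eqP ->; apply: pc_refl.
rewrite leq_eqVlt => /orP [/eqP <-|]; first by apply: pc_refl.
rewrite ltnS => ij; apply: pc_trans (IH ij).
by apply: pcW (H j); rewrite ltnS.
Qed.

Lemma chain_sc (U : nat -> P) : (forall j, pc j.+1 (U j.+1) (U j)) ->
  forall j, sc j.+1 (fun i => (U i)`_i) (U j).
Proof.
move=> H j i; rewrite ltnS => ij.
by apply: esym; apply: (pc_coef (chain H ij)).
Qed.

Lemma minv (w : series) : w 0%N = 1 -> exists v, smul w v = sone.
Proof.
move=> w0; set v := fun i => (Vn w i)`_i.
have hv := chain_sc (fun j => Vn_coh j w0).
exists v; apply: sc_ext => [[|j]]; first by exists 0; split => i.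
exists 1; split; last by apply: sc_sone.
apply: sc_pc (Vn_inv j w0).
by apply: sc_smul; [apply: sc_tr | apply: hv].
Qed.

Lemma decompX p : p`_0 = 0 -> p`_1 = 1 -> exists s, p = 'X + 'X^2 * s.
Proof.
move=> p0 p1; have : pdv 2 (p - 'X).
  apply: coef_pdv => i; case: i => [_|[_|//]].
    by rewrite coefB p0 coefX subrr.
  by rewrite coefB p1 coefX subrr.
by move=> [s hs]; exists s; rewrite -hs; ring.
Qed.

Lemma taylor p u e a : p`_0 = 0 -> p`_1 = 1 -> pdv 1 u -> pdv a e -> (1 <= a)%N ->
  pc a.+1 (p \Po (u - e)) (p \Po u - e).
Proof.
move=> p0 p1 hu he a1; have [s ->] := decompX p0 p1.
rewrite !comp_polyD !comp_polyM !comp_polyX /pc.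
rewrite (_ : u - e + (u - e) ^+ 2 * (s \Po (u - e)) - (u + u ^+ 2 * (s \Po u) - e)
   = (e * (e - u - u)) * (s \Po (u - e)) + u ^+ 2 * ((s \Po (u - e)) - (s \Po u))); last by ring.
apply: pdvD.
  apply: pdvMr; rewrite -addn1; apply: pdvM => //.
  apply: pdvB; [apply: pdvB => //|] => //; exact: pdvW a1 he.
have h2 : pdv 2 (u ^+ 2) by have := pdvexp 2 hu.
have h3 : pdv a ((s \Po (u - e)) - (s \Po u)).
  by apply: pc_comp_r; rewrite /pc (_ : u - e - u = - e); [apply: pdvN | ring].
have := pdvM h2 h3; apply: pdvW; rewrite addnC addn2 ltnW //.
Qed.

Fixpoint Un (f : series) (j : nat) : P :=
  match j with
  | 0 => 'X
  | j'.+1 => let U := Un f j' in U - (tr j.+1 f \Po U - 'X)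
  end.

Lemma Un_inv f j : f 0%N = 0 -> f 1%N = 1 ->
  pdv 1 (Un f j) /\ pc j.+1 (tr j.+1 f \Po Un f j) 'X.
Proof.
move=> f0 f1; elim: j => [|j [IH1 IH2]].
  split; first by apply: pdv1_coef0; rewrite coefX.
  apply: coef_pc => i; rewrite ltnS leqn0 => /eqP ->.
  by rewrite /= comp_polyXr coef_poly /= f0 coefX.
rewrite [Un f j.+1]/=.
set U := Un f j; set W := tr j.+2 f; set E := W \Po U - 'X.
have hE : pdv j.+1 E.
  rewrite /E; have h1 : pc j.+1 (W \Po U) (tr j.+1 f \Po U).
    by apply: pc_comp_l => //; apply: tr_pc.
  exact: (pc_trans h1 IH2).
split; first by apply: pdvB => //; apply: pdvW hE.
have W0 : W`_0 = 0 by rewrite coef_poly /= f0.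
have W1 : W`_1 = 1 by rewrite coef_poly /= f1.
have := taylor W0 W1 IH1 hE (ltn0Sn j).
move=> h; apply: pc_trans h _; rewrite /pc /E.
by rewrite (_ : W \Po U - (W \Po U - 'X) - 'X = 0); [apply: pdv0 | ring].
Qed.

Lemma Un_coh f j : f 0%N = 0 -> f 1%N = 1 -> pc j.+1 (Un f j.+1) (Un f j).
Proof.
move=> f0 f1; rewrite /pc [Un f j.+1]/=.
rewrite (_ : forall a b : P, a - b - a = - b); last by move=> a b; ring.
apply: pdvN; have [IH1 IH2] := Un_inv j f0 f1.
have h1 : pc j.+1 (tr j.+2 f \Po Un f j) (tr j.+1 f \Po Un f j).
  by apply: pc_comp_l => //; apply: tr_pc.
exact: (pc_trans h1 IH2).
Qed.

Lemma cinv (f : series) : f 0%N = 0 -> f 1%N = 1 ->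
  exists u, scomp f u = sX /\ u 0%N = 0 /\ u 1%N = 1.
Proof.
move=> f0 f1; set u := fun i => (Un f i)`_i.
have hu := chain_sc (fun j => Un_coh j f0 f1).
have u0 : u 0%N = 0 by rewrite /u /= coefX.
exists u; split; last split => //.
  apply: sc_ext => [[|j]]; first by exists 0; split => i.
  exists 'X; split; last by apply: sc_sX.
  have [_ h] := Un_inv j f0 f1.
  apply: sc_pc h; apply: sc_scomp => //; [apply: sc_tr | apply: hu].
rewrite /u /= coefB coefX coefB comp_polyXr coef_poly /= f1 coefX.
by rewrite subrr subr0.
Qed.

Lemma left_inv x : inR x -> exists y, inR y /\ rmul y x = rid.
Proof.
case: x => g f [/= g0 [f0 f1]].
have [u [hu [u0 u1]]] := cinv f0 f1.
have w0 : scomp g u 0%N = 1 by rewrite /scomp big_ord1 /= g0 mul1r.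
have [v hv] := minv w0.
have v0 : v 0%N = 1.
  have := congr1 (fun z : series => z 0%N) hv; rewrite /smul big_ord1 w0 mul1r => ->.
  by [].
exists (v, u); split; first by split.
by rewrite /rmul /= hu smulC hv.
Qed.

Lemma inv_ex x : inR x -> exists y, rinv x y.
Proof.
move=> hx; have [y [hy yx]] := left_inv hx.
have [z [hz zy]] := left_inv hy.
have xz : x = z.
  rewrite -(rmul1 x) -zy rmulA; last by case: hy => _ [].
    by rewrite yx rmulr1 //; case: hz => _ [].
  by case: hz => _ [].
by exists y; split => //; split => //; rewrite xz.
Qed.

Lemma sq_char2 (s : P) : ('X + 'X^2 * s) ^+ 2 = 'X^2 * (1 + 'X^2 * s ^+ 2).
Proof.
rewrite (_ : ('X + 'X^2 * s) ^+ 2 = 'X^2 * (1 + 'X^2 * s ^+ 2) + ('X^3 * s + 'X^3 * s)).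
  by rewrite P2_add addr0.
by ring.
Qed.

Lemma shift2 k D Fy : pdv (2 * k) D -> pdv 2 (Fy - 'X) -> pc (2 * k + 2) (D \Po Fy) D.
Proof.
move=> [d ->] [s hs]; have eF : Fy = 'X + 'X^2 * s by rewrite -hs; ring.
rewrite comp_polyM compXn.
have -> : Fy ^+ (2 * k) = 'X^(2 * k) * (1 + 'X^2 * s ^+ 2) ^+ k.
  by rewrite exprM eF sq_char2 exprMn -exprM.
rewrite /pc (_ : 'X^(2 * k) * (1 + 'X^2 * s ^+ 2) ^+ k * (d \Po Fy) - 'X^(2 * k) * d
   = 'X^(2 * k) * ((1 + 'X^2 * s ^+ 2) ^+ k * (d \Po Fy) - d)); last by ring.
apply: pdvM; first by apply: pdvXn.
have h1 : pc 2 ((1 + 'X^2 * s ^+ 2) ^+ k) 1.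
  have h0 : pc 2 (1 + 'X^2 * s ^+ 2) 1.
    by rewrite /pc (_ : 1 + 'X^2 * s ^+ 2 - 1 = 'X^2 * s ^+ 2); [apply: pdvXM | ring].
  by have := pcX k h0; rewrite expr1n.
have h2 : pc 2 (d \Po Fy) d.
  rewrite -{2}(comp_polyXr d); apply: pc_comp_r.
  by rewrite /pc hs; apply: pdvXM.
by have := pcM h1 h2; rewrite mul1r.
Qed.

Definition K n (x : rpair) := inR x /\ sc (2 * n) x.1 1 /\ sc (2 * n + 2) x.2 'X.

Lemma inR_f0 x : inR x -> x.2 0%N = 0. Proof. by case=> _ []. Qed.

Lemma K_sub n : subgroupR (K n).
Proof.
split; first by move=> x [].
split.
  split; first by split.
  by split; [apply: sc_sone | apply: sc_sX].
split.
  move=> x y [hx [gx fx]] [hy [gy fy]]; split; first by apply: inR_mul.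
  have fx0 := inR_f0 hx; split => /=.
    apply: (@sc_eqp _ _ (1 * (1%:P \Po 'X))); last by rewrite comp_polyC mul1r.
    apply: sc_smul => //; apply: sc_scomp => //; apply: sc_W fx; rewrite leq_addr //.
  apply: (@sc_eqp _ _ ('X \Po 'X)); last by rewrite comp_polyX.
  by apply: sc_scomp.
move=> x [hx [gx fx]]; have [y hy] := inv_ex hx; exists y; split => //.
case: hy => [iy [xy yx]]; split => //.
have fx0 := inR_f0 hx.
have e1 := congr1 fst xy; have e2 := congr1 snd xy; rewrite /= in e1 e2.
split.
  have h : sc (2 * n) sone (1 * (tr (2 * n) y.1 \Po 'X)).
    rewrite -e1; apply: sc_smul => //; apply: sc_scomp => //; first by apply: sc_tr.
    by apply: sc_W fx; rewrite leq_addr.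
  rewrite mul1r comp_polyXr in h.
  apply: sc_pc (@sc_tr _ y.1) _; apply: pc_sym; exact: sc_pc' (@sc_sone _) h.
have h : sc (2 * n + 2) sX (tr (2 * n + 2) y.2 \Po 'X).
  by rewrite -e2; apply: sc_scomp => //; apply: sc_tr.
rewrite comp_polyXr in h.
apply: sc_pc (@sc_tr _ y.2) _; apply: pc_sym; exact: sc_pc' (@sc_sX _) h.
Qed.

Lemma K_closed n : closedR (K n).
Proof.
move=> x hx H; have [s [[hs [gs fs]] ag]] := H (2 * n + 2)%N.
split => //; split => i im.
  rewrite -gs //; first by case: (ag i) => //; apply: ltnW; apply: leq_trans im _; rewrite leq_addr.
rewrite -fs //; by case: (ag i) => //; apply: ltnW.
Qed.

Lemma close n x y : K n x -> inR y ->
  exists S T, sc (2 * n + 2) (rmul x y).1 S /\ sc (2 * n + 2) (rmul y x).1 S /\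
              sc (2 * n + 4) (rmul x y).2 T /\ sc (2 * n + 4) (rmul y x).2 T.
Proof.
case: x => gx fx; case: y => gy fy [hx [hgx hfx]] hy /=.
have fx0 := inR_f0 hx; have fy0 := inR_f0 hy; rewrite /= in fx0 fy0.
set M := (2 * n + 4)%N.
set Gx := tr M gx; set Fx := tr M fx; set Gy := tr M gy; set Fy := tr M fy.
have sGx : sc M gx Gx by apply: sc_tr.
have sFx : sc M fx Fx by apply: sc_tr.
have sGy : sc M gy Gy by apply: sc_tr.
have sFy : sc M fy Fy by apply: sc_tr.
have M2 : (2 * n + 2 <= M)%N by rewrite leq_add2l.
have M0 : (2 * n <= M)%N by rewrite leq_addr.
have pFx : pc (2 * n + 2) Fx 'X by apply: sc_pc' hfx; apply: sc_W sFx.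
have pGx : pc (2 * n) Gx 1 by apply: sc_pc' hgx; apply: sc_W sGx.
have pFy : pdv 2 (Fy - 'X).
  have [_ h] := (inR_sc (gy, fy)).1 hy.
  by apply: sc_pc' h; apply: sc_W sFy; rewrite /M addnC.
exists (Gx * Gy), (Fy + (Fx - 'X)); split; [|split; [|split]].
- apply: sc_pc (sc_smul (sc_W M2 sGx) (sc_scomp (sc_W M2 sGy) (sc_W M2 sFx) fx0)) _.
  apply: pcM; first by apply: pc_refl.
  by rewrite -{2}(comp_polyXr Gy); apply: pc_comp_r.
- apply: sc_pc (sc_smul (sc_W M2 sGy) (sc_scomp (sc_W M2 sGx) (sc_W M2 sFy) fy0)) _.
  rewrite mulrC; apply: pcM; last by apply: pc_refl.
  have -> : Gx = 1 + (Gx - 1) by ring.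
  rewrite comp_polyD comp_polyC; apply: pcD; first by apply: pc_refl.
  by apply: shift2.
- apply: sc_pc (sc_scomp sFy sFx fx0) _.
  have [s hs] : exists s, Fy = 'X + 'X^2 * s by move: pFy => [s hs]; exists s; rewrite -hs; ring.
  rewrite [in X in pc _ X _]hs comp_polyD comp_polyX comp_polyM compXn.
  rewrite /pc (_ : Fx + Fx ^+ 2 * (s \Po Fx) - (Fy + (Fx - 'X))
     = (Fx ^+ 2 - 'X ^+ 2) * (s \Po Fx) + 'X^2 * ((s \Po Fx) - s)); last by rewrite hs; ring.
  apply: pdvD.
    apply: pdvMr.
    rewrite (_ : Fx ^+ 2 - 'X ^+ 2 = (Fx - 'X) ^+ 2 + ('X * (Fx - 'X) + 'X * (Fx - 'X))); last by ring.
    rewrite P2_add addr0.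
    have := pdvexp 2 pFx; apply: pdvW; rewrite /M; lia.
  have h : pc (2 * n + 2) (s \Po Fx) s by rewrite -{2}(comp_polyXr s); apply: pc_comp_r.
  by have := pdvM (pdvXM 2 1) h; rewrite mulr1 addnC -addnA.
- apply: sc_pc (sc_scomp sFx sFy fy0) _.
  set E := Fx - 'X.
  have eFx : Fx = 'X + E by rewrite /E; ring.
  rewrite {1}eFx comp_polyD comp_polyX.
  apply: pcD; first by apply: pc_refl.
  rewrite /M (_ : (2 * n + 4 = 2 * n.+1 + 2)%N); last by lia.
  by apply: shift2 => //; rewrite /E (_ : (2 * n.+1 = 2 * n + 2)%N) //; lia.
Qed.

Lemma comm_K n c : is_comm (K n) inR c -> K n.+1 c.
Proof.
move=> [x [y [xi [yi [kx [_ [hx [hy [[ixi [xxi xix]] [[iyi [yyi yiy]] ->]]]]]]]]]].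
have f0 := inR_f0.
set Qi := rmul xi yi.
have iQi : inR Qi by apply: inR_mul.
have hQ : rmul Qi (rmul y x) = rid.
  by rewrite /Qi rmulA ?f0 // -(@rmulA yi y x (f0 _ iyi) (f0 _ hy)) yiy rmul1.
have hc : rmul (rmul Qi x) y = rmul Qi (rmul x y) by rewrite rmulA ?f0.
rewrite hc.
have [S [T [s1 [s2 [s3 s4]]]]] := close kx hy.
have q0 := f0 _ iQi.
split; first by do 2 apply: inR_mul => //.
have e1 := congr1 fst hQ; have e2 := congr1 snd hQ; rewrite /= in e1 e2.
rewrite (_ : (2 * n.+1 = 2 * n + 2)%N); last by lia.
rewrite (_ : (2 * n + 2 + 2 = 2 * n + 4)%N); last by lia.
split => /=.
  have h1 := sc_smul (@sc_tr (2 * n + 2) Qi.1) (sc_scomp s1 (@sc_tr _ Qi.2) q0).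
  have h2 := sc_smul (@sc_tr (2 * n + 2) Qi.1) (sc_scomp s2 (@sc_tr _ Qi.2) q0).
  rewrite e1 in h2.
  by apply: sc_pc h1 _; apply: pc_sym; apply: sc_pc' (@sc_sone _) h2.
have h1 := sc_scomp s3 (@sc_tr (2 * n + 4) Qi.2) q0.
have h2 := sc_scomp s4 (@sc_tr (2 * n + 4) Qi.2) q0.
rewrite e2 in h2.
by apply: sc_pc h1 _; apply: pc_sym; apply: sc_pc' (@sc_sX _) h2.
Qed.

Lemma gamma_K n x : gammaR n x -> K n x.
Proof.
elim: n x => [|n IH] x.
  move=> hx; split => //; split => //.
  by have [_ h] := (inR_sc x).1 hx.
move=> hx; apply: hx; [apply: K_sub | apply: K_closed |].
move=> c hc; apply: comm_K; move: hc => [x' [y [xi [yi [g rest]]]]].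
by exists x', y, xi, yi; split; [apply: IH|].
Qed.

Lemma F2neq (a b : F) : a != b -> b = a + 1.
Proof. case: a => [[|[|//]] ?]; case: b => [[|[|//]] ?] /=; rewrite ?eqxx // => _; apply/val_inj; reflexivity. Qed.
Lemma binom1 (Y : P) k : exists Z, (1 + Y) ^+ k = 1 + k%:R * Y + Y ^+ 2 * Z.
Proof.
elim: k => [|k [Z hZ]]; first by exists 0; rewrite expr0; ring.
exists (k%:R + Z + Y * Z); rewrite exprS hZ mulrS; ring.
Qed.
Lemma F2odd k : (k%:R : F) = (odd k)%:R.
Proof. by rewrite -(Fp_nat_mod (isT : prime 2)) modn2. Qed.

Lemma phi_pow (Phi : P) j1 k : (1 <= j1)%N -> odd k -> pdv 2 (Phi - 'X) ->
  pc (k + j1).+1 (Phi + Phi ^+ j1.+1) 'X -> pc (k + j1).+1 (Phi ^+ k) ('X^k + 'X^(k + j1)).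
Proof.
move=> j1p ok [sg hsg] hm.
have k0 : (0 < k)%N by rewrite odd_gt0.
have eP : Phi = 'X * (1 + 'X * sg) by rewrite -(subrK 'X Phi) hsg; ring.
have h1 : pc j1.+2 (Phi ^+ j1.+1) ('X^(j1.+1)).
  rewrite eP exprMn /pc (_ : 'X^(j1.+1) * (1 + 'X * sg) ^+ j1.+1 - 'X^(j1.+1)
     = 'X^(j1.+1) * ((1 + 'X * sg) ^+ j1.+1 - 1)); last by ring.
  rewrite -addn1; apply: pdvM; first by apply: pdvXn.
  have h0 : pc 1 (1 + 'X * sg) 1.
    by rewrite /pc (_ : 1 + 'X * sg - 1 = 'X^1 * sg); [apply: pdvXM | rewrite expr1; ring].
  by have := pcX j1.+1 h0; rewrite expr1n.
have h2 : pc j1.+2 Phi ('X + 'X^(j1.+1)).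
  have hm' : pc j1.+2 (Phi + Phi ^+ j1.+1) 'X by apply: pcW hm; lia.
  rewrite /pc (_ : Phi - ('X + 'X^(j1.+1)) = (Phi + Phi ^+ j1.+1 - 'X) - (Phi ^+ j1.+1 - 'X^(j1.+1))
     - ('X^(j1.+1) + 'X^(j1.+1))); last by ring.
  by rewrite P2_add subr0; apply: pdvB.
have [rho hrho] := h2.
have eP2 : Phi = 'X * (1 + 'X^j1 * (1 + 'X * rho)).
  by rewrite -(subrK ('X + 'X^(j1.+1)) Phi) hrho !exprS; ring.
rewrite eP2 exprMn.
have [Z hZ] := binom1 ('X^j1 * (1 + 'X * rho)) k.
have hk1 : (k%:R : P) = 1 by rewrite -polyC_natr F2odd ok.
rewrite hZ hk1 mul1r /pc exprD.
rewrite (_ : 'X^k * (1 + 'X^j1 * (1 + 'X * rho) + ('X^j1 * (1 + 'X * rho)) ^+ 2 * Z)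
   - ('X^k + 'X^k * 'X^j1) = ('X^k * 'X^j1 * 'X) * rho
   + ('X^k * 'X^j1 * 'X^j1) * ((1 + 'X * rho) ^+ 2 * Z)); last by ring.
apply: pdvD; apply: pdvMr.
  by rewrite -exprD -exprSr; apply: pdvXn.
by rewrite -!exprD; apply: pdvXn; lia.
Qed.

Lemma comm_decomp x y xi yi : inR x -> inR y -> rinv x xi -> rinv y yi ->
  inR (rmul xi yi) /\ rmul (rmul xi yi) (rmul y x) = rid /\
  rmul (rmul (rmul xi yi) x) y = rmul (rmul xi yi) (rmul x y).
Proof.
move=> hx hy [ixi [xxi xix]] [iyi [yyi yiy]].
have f0 := inR_f0.
have iQi : inR (rmul xi yi) by apply: inR_mul.
split => //; split.
  by rewrite rmulA ?f0 // -(@rmulA yi y x (f0 _ iyi) (f0 _ hy)) yiy rmul1.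
by rewrite rmulA ?f0.
Qed.

Lemma z_elem n (S : rset) m : (forall a, Appell (2 * n - 1) a -> gammaR n a) ->
  (forall c, is_comm (gammaR n) inR c -> S c) -> (2 * n + 2 <= m)%N ->
  exists z, S z /\ z.2 = sX /\ sc m.+1 z.1 (1 + 'X^m).
Proof.
move=> IH hS hm.
have [j1 [k [hj1 [hj1' [ok [ekm hk]]]]]] : exists j1 k, (1 <= j1)%N /\ (j1 <= 2)%N /\
    odd k /\ m = (k + j1)%N /\ (2 * n + 1 <= k)%N.
  case hm2: (odd m).
    have mne : m != (2 * n + 2)%N.
      by apply/eqP => e; move: hm2; rewrite e oddD oddM.
    exists 2%N, (m - 2)%N; split => //; split => //; split; last by lia.
    by rewrite oddB ?hm2 //; lia.
  exists 1%N, (m - 1)%N; split => //; split => //; split; last by lia.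
  rewrite oddB ?hm2 //; lia.
set j := j1.+1.
have k0 : k != 0%N by apply/eqP => e; move: ok; rewrite e.
set ga : series := fun i => (i == 0%N)%:R + (i == k)%:R.
set fy : series := fun i => (i == 1%N)%:R + (i == j)%:R.
have ia : inR (ga, sX).
  by split; [rewrite /ga /= eq_sym (negbTE k0) addr0 | split].
have aA : Appell (2 * n - 1) (ga, sX).
  split => //; split => // i /andP [i1 i2]; rewrite /ga /=.
  rewrite (_ : (i == 0%N) = false); last by apply/eqP; lia.
  by rewrite (_ : (i == k) = false) ?addr0 //; apply/eqP; lia.
have fy0 : fy 0%N = 0 by rewrite /fy /j /= addr0.
have iy : inR (sone, fy).
  split => //; split => //; rewrite /fy /j /=.
  by rewrite (_ : (1%N == j1.+1) = false) ?addr0 //; apply/eqP; lia.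
have [ai hai] := inv_ex ia; have [yi hyi] := inv_ex iy.
have Sc : S (rmul (rmul (rmul ai yi) (ga, sX)) (sone, fy)).
  apply: hS; exists (ga, sX), (sone, fy), ai, yi; split; first by apply: IH.
  by do 5 (split => //).
exists (rmul (rmul (rmul ai yi) (ga, sX)) (sone, fy)); split => //.
have [iQ [hQ hc]] := comm_decomp ia iy hai hyi.
rewrite hc.
move: iQ hQ; case: (rmul ai yi) => gQ fQ iQ hQ.
have fQ0 : fQ 0%N = 0 by case: iQ => _ [].
have e1 := congr1 fst hQ; have e2 := congr1 snd hQ.
rewrite /rmul /= smul1 scompXl // in e1 e2.
rewrite /rmul /= scomp1 // smulr1 scompXr e2; split => //.
rewrite scompA // e2 scompXr in e1.
set M := m.+1.
set Phi := tr M fQ; set G := tr M gQ.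
have sga : sc M ga (1 + 'X^k) by move=> i _; rewrite coefD coef1 coefXn.
have sfy : sc M fy ('X + 'X^j) by move=> i _; rewrite coefD coefX coefXn.
have hPhi : pc M (Phi + Phi ^+ j) 'X.
  have h := sc_scomp sfy (@sc_tr M fQ) fQ0.
  rewrite e2 comp_polyD comp_polyX compXn in h.
  by apply: pc_sym; apply: sc_pc' (@sc_sX _) h.
have [_ sQ2] := (inR_sc (gQ, fQ)).1 iQ.
have [sQ1 _] := (inR_sc (gQ, fQ)).1 iQ.
have M2 : (2 <= M)%N by rewrite /M; lia.
have hPhi2 : pdv 2 (Phi - 'X).
  by apply: sc_pc' sQ2; apply: sc_W (@sc_tr M fQ).
have hG : pc M (G * (1 + 'X^k)) 1.
  have h := sc_smul (@sc_tr M gQ) sga; rewrite e1 in h.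
  by apply: pc_sym; apply: sc_pc' (@sc_sone _) h.
have hG0 : pdv 1 (G - 1).
  have M1 : (1 <= M)%N by [].
  exact: pc_sym (sc_pc' sQ1 (sc_W M1 (@sc_tr M gQ))).
have hpow : pc M (Phi ^+ k) ('X^k + 'X^m).
  by rewrite /M ekm; apply: phi_pow => //; rewrite -ekm.
have h := sc_smul (@sc_tr M gQ) (sc_scomp sga (@sc_tr M fQ) fQ0).
apply: sc_pc h _; rewrite comp_polyD comp_polyC compXn.
have h3 : pc M (G * (1 + Phi ^+ k)) (G * (1 + 'X^k) + G * 'X^m).
  rewrite -mulrDr -addrA; apply: pcM; first by apply: pc_refl.
  by apply: pcD; [apply: pc_refl|].
apply: pc_trans h3 _.
rewrite /pc (_ : G * (1 + 'X^k) + G * 'X^m - (1 + 'X^m)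
   = (G * (1 + 'X^k) - 1) + 'X^m * (G - 1)); last by ring.
apply: pdvD => //.
by have := pdvM (pdvXM m 1) hG0; rewrite mulr1 addn1.
Qed.

Lemma approx n (S : rset) x : subgroupR S ->
  (forall m, (2 * n + 2 <= m)%N -> exists z, S z /\ z.2 = sX /\ sc m.+1 z.1 (1 + 'X^m)) ->
  Appell (2 * n + 1) x ->
  forall d, exists sp, S sp /\ sp.2 = sX /\ forall i, (i < 2 * n + 2 + d)%N -> sp.1 i = x.1 i.
Proof.
move=> [sub [Sid [Smul _]]] hz [[x0 _] [x2 hx]].
elim=> [|d [sp [Ss [s2 ag]]]].
  exists rid; split => //; split => // i; rewrite addn0 /= /sone.
  case: i => [_|i ilt]; first by rewrite x0.
  by rewrite hx //; lia.
set N := (2 * n + 2 + d)%N.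
have s0 : sp.1 0%N = 1 by case: (sub _ Ss).
case: (eqVneq (sp.1 N) (x.1 N)) => hN.
  exists sp; split => //; split => // i; rewrite addnS ltnS leq_eqVlt => /orP [/eqP ->|] //.
  by apply: ag.
have [z [Sz [z2 hz1]]] := hz N (leq_addr _ _).
exists (rmul sp z); split; first by apply: Smul.
rewrite /rmul /= z2 s2 !scompXr; split => // i.
rewrite addnS ltnS => iN.
have h := sc_smul (@sc_tr N.+1 sp.1) hz1.
rewrite (h i) //.
rewrite mulrDr mulr1 coefD coefMXn.
move: iN; rewrite leq_eqVlt => /orP [/eqP ->|iN].
  by rewrite ltnn subnn !coef_poly ltnSn /= s0 (F2neq hN).
by rewrite iN addr0 coef_poly ltnS ltnW // ag.
Qed.

Lemma appell_gamma n x : Appell (2 * n - 1) x -> gammaR n x.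
Proof.
elim: n x => [|n IH] x; first by case.
move=> hx S hsub hcl hcomm.
have hx' : Appell (2 * n + 1) x by rewrite (_ : (2 * n + 1 = 2 * n.+1 - 1)%N) //; lia.
apply: hcl; first by case: hx'.
move=> N.
have [sp [Ss [s2 ag]]] := approx hsub (fun m hm => z_elem IH hcomm hm) hx' N.
exists sp; split => // i iN; split; first by apply: ag; lia.
by rewrite s2; case: hx' => _ [-> _].
Qed.

Local Close Scope ring_scope.

(* gammaR n is gamma_{n+1}(R) *)
Theorem corollary11 (n : nat) : (2 <= n)%N ->
  forall x : rpair,
    (Appell (2 * n - 3) x /\ gammaR n x) <-> Appell (2 * n - 1) x.
Proof.
move=> n2 x; split.
  move=> [[hx [x2 _]] hg]; have [_ [g1 _]] := gamma_K hg.
  split => //; split => // i /andP [i1 i2].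
  by rewrite (g1 i) ?coef1; [rewrite (_ : (i == 0%N) = false) //; apply/eqP; lia | lia].
move=> hA; split; last by apply: appell_gamma.
case: hA => hx [x2 h]; split => //; split => // i /andP [i1 i2]; apply: h.
by apply/andP; split => //; lia.
Qed.
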